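(* Let $X$ be a complex Banach space, $T\in B(X)$ a Fredholm operator, and $(T_n)$ a sequence in $B(X)$ with $T_n\overset{\nu}{\to}T$. Then $[\limsup\sigma_{ap}(T_n)]\setminus\{0\}\subseteq\sigma_{ap}(T)$.
   Context: $\sigma_{ap}(S)=\{\lambda\in\mathbb{C}: S-\lambda \text{ is not bounded below}\}$. For subsets $E_n\subseteq\mathbb{C}$, $\limsup E_n$ is the set of $\lambda$ such that for every $\epsilon>0$ the ball $B(\lambda,\epsilon)$ meets $E_n$ for infinitely many $n$. $T_n\overset{\nu}{\to}T$ means $(\|T_n\|)$ is bounded, $\|(T_n-T)T\|\to0$ and $\|(T_n-T)T_n\|\to0$. *)

(* Defs.v *)
From mathcomp Require Import all_boot all_order all_algebra.
From mathcomp Require Import all_classical all_reals all_analysis.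
From mathcomp Require Export complex.
Import Order.TTheory GRing.Theory Num.Theory.
Import numFieldNormedType.Exports.
Set Implicit Arguments. Unset Strict Implicit. Unset Printing Implicit Defensive.
Local Open Scope ring_scope.
Local Open Scope classical_set_scope.

Section Defs.
Variables (R : realType) (X : normedModType R[i]).

Definition bounded_op (T : {linear X -> X}) : Prop := continuous T.

Definition bounded_below (S : X -> X) : Prop :=
  exists c : R[i], 0 < c /\ forall x : X, c * `|x| <= `|S x|.

Definition ap_spectrum (S : X -> X) : set R[i] :=
  [set lam | ~ bounded_below (fun x => S x - lam *: x)].

Definition limsup_sets (E : nat -> set R[i]) : set R[i] :=
  [set lam | forall eps : R[i], 0 < eps ->
     forall N : nat, exists n : nat, (N <= n)%N /\
       exists mu, E n mu /\ `|mu - lam| < eps].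

Definition finite_dim (V : set X) : Prop :=
  exists s : seq X, forall x, V x ->
    exists c : nat -> R[i], x = \sum_(i < size s) c i *: s`_i.

Definition fredholm (T : {linear X -> X}) : Prop :=
  [/\ bounded_op T,
      finite_dim [set x | T x = 0],
      closed (range T) &
      exists s : seq X, forall y : X, exists (x : X) (c : nat -> R[i]),
        y = T x + \sum_(i < size s) c i *: s`_i].

(* the operator A has norm tending to 0 along the sequence:
   ||A n|| -> 0, written out as ||A n x|| <= eps ||x|| eventually *)
Definition opnorm_to0 (A : nat -> X -> X) : Prop :=
  forall eps : R[i], 0 < eps -> exists N : nat, forall n : nat, (N <= n)%N ->
    forall x : X, `|A n x| <= eps * `|x|.

Definition nu_conv (Tn : nat -> {linear X -> X}) (T : {linear X -> X}) : Prop :=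
  [/\ exists M : R[i], forall n x, `|Tn n x| <= M * `|x|,
      opnorm_to0 (fun n x => Tn n (T x) - T (T x)) &
      opnorm_to0 (fun n x => Tn n (Tn n x) - T (Tn n x))].

End Defs.

(* Main.v *)
Require Import Defs.
From mathcomp Require Import all_boot all_order all_algebra.
From mathcomp Require Import all_classical all_reals all_analysis.
From mathcomp Require Import complex.
From mathcomp Require Import ring lra.
Import Order.TTheory GRing.Theory Num.Theory.
Import numFieldNormedType.Exports.
Local Open Scope complex_scope.
Local Open Scope ring_scope.
Local Open Scope classical_set_scope.

Lemma core_ineq (R : realFieldType) (nx c l m d a b p q r ne K Kn : R) :
  0 < nx -> 0 < c -> 0 < l -> 0 <= m -> 0 <= d -> 0 <= K -> 0 <= Kn -> 0 <= ne ->
  c * nx <= a -> a <= b + d * nx -> m * b <= p + q + m * ne + r -> p <= (c * l / 8) * nx ->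
  q <= K * ne -> r <= Kn * ne -> ne < (c * l / (8 * (K + Kn + 2 * l))) * nx ->
  d < Num.min (l / 2) (c / 4) -> l <= m + d -> m <= l + d -> False.
Proof.
move=> nx0 c0 l0 m0 d0 K0 Kn0 ne0 h1 h2 h3 h4 h5 h6 h7.
rewrite lt_min => /andP[d1 d2] h8 h9.
have S0 : 0 < K + Kn + 2 * l by lra.
have m1 : l / 2 <= m by lra.
have m2 : m <= 2 * l by lra.
have e1 : (K + Kn + m) * ne <= c * l / 8 * nx.
  apply: (le_trans (y := (K + Kn + 2 * l) * ne)); first by rewrite ler_wpM2r //; lra.
  have h : (K + Kn + 2 * l) * ne < (K + Kn + 2 * l) * ((c * l / (8 * (K + Kn + 2 * l))) * nx).
    by rewrite ltr_pM2l.
  have hE : (K + Kn + 2 * l) * ((c * l / (8 * (K + Kn + 2 * l))) * nx) = c * l / 8 * nx.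
    by field; rewrite gt_eqF.
  by rewrite -hE ltW.
have e2 : m * (c * nx) <= m * a by rewrite ler_wpM2l.
have e3 : m * a <= m * b + m * (d * nx) by rewrite -mulrDr ler_wpM2l.
have e4 : m * (d * nx) <= m * (c / 4 * nx).
  by rewrite ler_wpM2l // ler_wpM2r //; [lra|lra].
have e5 : c * l / 8 * nx <= m * c / 4 * nx.
  rewrite ler_wpM2r //; [lra|]. nra.
have e6 : 0 < m * c * nx by rewrite !mulr_gt0 //; lra.
nra.
Qed.

Lemma reC (R : realType) (a : R[i]) : 0 <= a -> a = (complex.Re a)%:C.
Proof. by move=> a0; rewrite RRe_real // ger0_real. Qed.

Lemma op_bound (R : realType) (X : normedModType R[i]) (f : {linear X -> X}) :
  continuous f -> exists K : R, 0 < K /\ forall x, `|f x| <= K%:C * `|x|.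
Proof.
move=> /linear_bounded_continuous /linear_boundedP /pinfty_ex_gt0 [K K0 HK].
exists (complex.Re K); split; first by move: K0; rewrite ltcE /= => /andP[].
by rewrite -reC ?ltW.
Qed.

Lemma zmod_id (V : zmodType) (A B C D E : V) :
  A - B = - (B + D + E - (A + C)) - C + D + E.
Proof.
rewrite opprB -!addrA; congr (_ + _).
by rewrite opprD -!addrA addrCA (addrCA (- (D + E))) addNr addr0 subrr addr0.
Qed.

Lemma Re_ge0 (R : realType) (a : R[i]) : 0 <= a -> 0 <= complex.Re a.
Proof. by rewrite lecE => /andP[]. Qed.

Lemma Re_gt0 (R : realType) (a : R[i]) : 0 < a -> 0 < complex.Re a.
Proof. by rewrite ltcE => /andP[]. Qed.

Theorem theorem3p3 (R : realType) (X : completeNormedModType R[i])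
  (T : {linear X -> X}) (Tn : nat -> {linear X -> X}) :
  fredholm T ->
  (forall n, bounded_op (Tn n)) ->
  nu_conv Tn T ->
  limsup_sets (fun n => ap_spectrum (Tn n)) `\ 0 `<=` ap_spectrum T.
Proof.
move=> [Tc _ _ _] Tnc [_ _ Hnu] lam [Hls Hne] [c [c0 Hc]].
have [K [K0 HK]] := @op_bound R X T Tc.
set l := complex.Re `|lam|.
have l0 : 0 < l.
  have : 0 < `|lam| by rewrite normr_gt0; apply/eqP.
  by rewrite ltcE /= => /andP[].
set cr := complex.Re c.
have cr0 : 0 < cr by move: c0; rewrite ltcE /= => /andP[].
have cE : c = cr%:C by rewrite /cr -reC ?ltW.
set delta := Num.min (l / 2) (cr / 4).
have delta0 : 0 < delta by rewrite lt_min !divr_gt0.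
have [N HN] := Hnu ((cr * l / 8)%:C) ltac:(by rewrite ltcR !divr_gt0 ?mulr_gt0).
have [n [Nn [mu [Hmu Hd]]]] := Hls delta%:C ltac:(by rewrite ltcR) N.
have [Kn [Kn0 HKn]] := @op_bound R X (Tn n) (Tnc n).
set eta := cr * l / (8 * (K + Kn + 2 * l)).
have eta0 : 0 < eta by rewrite !divr_gt0 ?mulr_gt0 // !addr_gt0 // mulr_gt0.
have [x Hx] : exists x, ~ (eta%:C * `|x| <= `|Tn n x - mu *: x|).
  apply: contrapT => Hn; apply: Hmu; exists eta%:C; split; first by rewrite ltcR.
  by move=> x; apply: contrapT => Hx; apply: Hn; exists x.
set e := Tn n x - mu *: x.
have TnxE : Tn n x = mu *: x + e by rewrite /e addrC subrK.
have Hid : mu *: (T x - mu *: x) = - (Tn n (Tn n x) - T (Tn n x)) - T e + mu *: e + Tn n e.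
  have -> : Tn n (Tn n x) = mu *: (mu *: x) + mu *: e + Tn n e.
    by rewrite TnxE linearD linearZ /= TnxE scalerDr.
  have -> : T (Tn n x) = mu *: T x + T e by rewrite TnxE linearD linearZ.
  rewrite scalerBr; exact: zmod_id.
have h1 := Hc x.
have h2 : `|T x - lam *: x| <= `|T x - mu *: x| + `|mu - lam| * `|x|.
  have -> : T x - lam *: x = (T x - mu *: x) + (mu - lam) *: x.
    by rewrite scalerBl addrA subrK.
  by rewrite -normrZ ler_normD.
have h3 : `|mu| * `|T x - mu *: x| <=
    `|Tn n (Tn n x) - T (Tn n x)| + `|T e| + `|mu| * `|e| + `|Tn n e|.
  rewrite -normrZ Hid.
  apply: (le_trans (ler_normD _ _)); rewrite lerD2r.
  apply: (le_trans (ler_normD _ _)); rewrite normrZ lerD2r.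
  by apply: (le_trans (ler_normB _ _)); rewrite normrN.
have h4 := HN n Nn x.
have h5 := HK e.
have h6 := HKn e.
have h8 := Hd.
have h9 : `|lam| <= `|mu| + `|mu - lam|.
  have {1}-> : lam = mu - (mu - lam) by rewrite opprB addrC subrK.
  exact: ler_normB.
have h10 : `|mu| <= `|lam| + `|mu - lam|.
  have {1}-> : mu = lam + (mu - lam) by rewrite addrC subrK.
  exact: ler_normD.
have x0 : 0 < `|x|.
  rewrite normr_gt0; apply/negP => /eqP x0; apply: Hx.
  by rewrite x0 normr0 mulr0 normr_ge0.
move: h1 h2 h3 h4 h5 h6 Hx h8 h9 h10 x0.
rewrite cE (@reC _ _ (normr_ge0 x)) (@reC _ _ (normr_ge0 (T x - lam *: x))).
rewrite (@reC _ _ (normr_ge0 (T x - mu *: x))) (@reC _ _ (normr_ge0 (mu - lam))).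
rewrite (@reC _ _ (normr_ge0 mu)) (@reC _ _ (normr_ge0 lam)) (@reC _ _ (normr_ge0 e)).
rewrite (@reC _ _ (normr_ge0 (Tn n (Tn n x) - T (Tn n x)))) (@reC _ _ (normr_ge0 (T e))).
rewrite (@reC _ _ (normr_ge0 (Tn n e))).
rewrite -!rmorphM -!rmorphD !lecR !ltcR.
move=> h1 h2 h3 h4 h5 h6 h7 h8 h9 h10 x0.
apply: (@core_ineq _ _ _ _ _ _ _ _ _ _ _ _ _ _ x0 cr0 l0 _ _ (ltW K0) (ltW Kn0) _ h1 h2 h3 h4 h5 h6 _ h8 h9 h10).
- exact/Re_ge0/normr_ge0.
- exact/Re_ge0/normr_ge0.
- exact/Re_ge0/normr_ge0.
- by rewrite ltNge; apply/negP.
Qed.
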